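(* Let $p$ be an odd prime and let $a,b_1,b_2,c$ be integers such that $0\le a<p$, $0<c\le p$, $0\le b_2-c+1<p$, $0\le b_1+b_2-c+1<p$, and $p-1\le a+b_1+b_2-c+1<2p-1$. Then in $\mathbb{F}_p$ $$\int_{[1;1]_p}t^a(1-t)^{b_1}(s-t)^{p-c}(1-s)^{b_2}\,dt\,ds=\frac{a!\,(b_1+b_2-c+1)!}{(a+b_1+b_2-c+2-p)!}\cdot\frac{(p-c)!\,b_2!}{(b_2-c+1)!}.$$
   Context: For a polynomial $P(x_1,\dots,x_k)=\sum_d c_dx_1^{d_1}\cdots x_k^{d_k}$ with coefficients in $\mathbb{F}_p$ and $l\in\mathbb{Z}_{>0}^k$, the $\mathbb{F}_p$-integral $\int_{[l_1,\dots,l_k]_p}P\,dx$ is the coefficient $c_{l_1p-1,\dots,l_kp-1}$. Thus the left-hand side is the coefficient of $t^{p-1}s^{p-1}$ in the polynomial reduced mod $p$. Factorials are taken in $\mathbb{F}_p$. *)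

(* Defs.v *)
From HB Require Import structures.
From mathcomp Require Import all_boot all_order all_algebra.
Set Implicit Arguments. Unset Strict Implicit. Unset Printing Implicit Defensive.
Import GRing.Theory.
Local Open Scope ring_scope.

(* Bivariate polynomials in (t, s) over a ring R are represented as
   polynomials in s whose coefficients are polynomials in t:
   P : {poly {poly R}}, and the coefficient of t^i s^j is (P`_j)`_i. *)
Definition var_t {R : nzRingType} : {poly {poly R}} := ('X)%:P.
Definition var_s {R : nzRingType} : {poly {poly R}} := 'X.

(* F_p-integral over [l1, l2]_p: the coefficient of t^(l1 p - 1) s^(l2 p - 1). *)
Definition Fp_integral2 {R : nzRingType} (p l1 l2 : nat) (P : {poly {poly R}}) : R :=
  (P`_(l2 * p).-1)`_(l1 * p).-1.

(* Main.v *)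
Require Import Defs.
From HB Require Import structures.
From mathcomp Require Import all_boot all_order all_algebra.
From mathcomp Require Import ring zify.
Import GRing.Theory.
Local Open Scope ring_scope.

Lemma trans_coef (R : comNzRingType) (p : nat) (pc : p \in [pchar R]) (f : {poly R}) v :
  (size f <= (p.*2).-1)%N -> (f \Po ('X + v%:P))`_p.-1 = f`_p.-1.
Proof.
move=> hs.
have pp := pcharf_prime pc; have p1 := prime_gt1 pp.
have key : forall i, (i < (p.*2).-1)%N -> (('X + v%:P) ^+ i)`_p.-1 = (p.-1 == i)%:R.
  move=> i hi.
  have eX : 'X + v%:P = 'X - (- v)%:P by rewrite polyCN opprK.
  case: (ltnP i p) => hip.
    case: (ltngtP i p.-1) => hi2.
    - rewrite nth_default; last by rewrite eX size_exp_XsubC.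
      by [].
    - by move: hip; rewrite -(ltn_predK p1) ltnS leqNgt hi2.
    - have := monic_exp i (monicXsubC (- v)); rewrite -eX => /monicP.
      by rewrite lead_coefE eX size_exp_XsubC -eX /= hi2.
  have -> : i = (p + (i - p))%N by rewrite subnKC.
  rewrite exprD exprDn_pchar; last first.
    apply: (sub_in_pnat _ (pnat_id pp)) => q; rewrite (pi_of_prime pp) !inE => /eqP -> _; by have := pc; rewrite -pchar_poly.
  have lt : (p.-1 < p)%N by rewrite prednK ?ltnSn // ltnW.
  rewrite mulrDl coefD coefXnM lt -polyC_exp coefCM nth_default; last first.
    rewrite eX size_exp_XsubC; move: p1 hi hip; rewrite -addnn; clear; case: p => // p _ /=; lia.
  rewrite mulr0 addr0 subnKC //.
  by rewrite ltn_eqF // (leq_trans lt hip).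
transitivity ((\poly_(i < size f) f`_i)`_p.-1); last by rewrite coefK.
rewrite poly_def comp_polyE !coef_sum.
apply: eq_bigr => i _.
by rewrite !coefZ key ?coefXn // (leq_trans (ltn_ord i) hs).
Qed.

Lemma coef_CsubX (R : comNzRingType) (u : R) m k :
  ((u%:P - 'X) ^+ m)`_k = ((-1) ^+ k * u ^+ (m - k)) *+ 'C(m, k).
Proof.
rewrite exprBn.
have -> : \sum_(i < m.+1) ((-1) ^+ i * u%:P ^+ (m - i) * 'X ^+ i) *+ 'C(m, i)
   = \sum_(i < m.+1) (((-1) ^+ i * u ^+ (m - i)) *+ 'C(m, i)) *: 'X^i.
  apply: eq_bigr => i _.
  by rewrite -mul_polyC rmorphMn rmorphM /= !rmorphXn /= rmorphN /= rmorph1 mulrnAl.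
rewrite coef_sumMXn (eq_bigl (fun i : 'I_m.+1 => i == k :> nat)) // (big_ord1_eq _ (fun i => ((-1) ^+ i * u ^+ (m - i)) *+ 'C(m, i))).
case: ltnP => // h.
by rewrite bin_small.
Qed.

Lemma fact_nz p k : prime p -> (k < p)%N -> (k`!%:R : 'F_p) != 0.
Proof.
move=> pp; elim: k => [|k IH] hk; first by rewrite oner_eq0.
rewrite factS natrM mulf_neq0 ?IH ?(ltnW hk) //.
by rewrite -(dvdn_pcharf (pchar_Fp pp)) gtnNdvd.
Qed.

Lemma natFp_opp p k : prime p -> (k <= p)%N -> ((p - k)%:R : 'F_p) = - k%:R.
Proof.
move=> pp hk; apply/eqP; rewrite -addr_eq0 -natrD subnK //.
by rewrite pchar_Fp_0.
Qed.

Lemma wilsonF p k : prime p -> (k < p)%N ->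
  (k`!%:R * (p.-1 - k)`!%:R : 'F_p) = (-1) ^+ k.+1.
Proof.
move=> pp; have p1 := prime_gt1 pp.
elim: k => [|k IH] hk.
  rewrite fact0 mul1r subn0 expr1; apply/eqP; rewrite -addr_eq0 -(natrD _ _ 1) addn1.
  by rewrite -(dvdn_pcharf (pchar_Fp pp)) -Wilson.
have IH' := IH (ltnW hk).
have e : (p.-1 - k = (p.-1 - k.+1).+1)%N by lia.
rewrite e factS natrM in IH'.
have e2 : ((p.-1 - k.+1).+1%:R : 'F_p) = - k.+1%:R.
  by rewrite -e (_ : p.-1 - k = p - k.+1)%N ?natFp_opp //; lia.
rewrite e2 in IH'.
rewrite factS natrM exprS -IH'.
ring.
Qed.

Lemma binF p n m : prime p -> (m <= n)%N -> (m < p)%N -> (n - m < p)%N ->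
  ('C(n, m)%:R : 'F_p) = n`!%:R / (m`!%:R * (n - m)`!%:R).
Proof.
move=> pp hmn h1 h2; rewrite -(bin_fact hmn) !natrM mulfK //.
by rewrite mulf_neq0 ?fact_nz.
Qed.

Lemma alg_id (F : fieldType) (s t A Bf D E P b : F) :
  s != 0 -> t != 0 -> A != 0 -> D != 0 -> E != 0 -> P != 0 ->
  s * (b / (- s / P * E)) * (t * (Bf / (- t / A * D))) = A * Bf / D * (P * b / E).
Proof. by move=> *; field; rewrite !oppr_eq0; repeat (apply/andP; split). Qed.

Lemma final_arith p a b1 b2 c
  (hp : prime p) (hodd : odd p)
  (ha : (a < p)%N) (hc0 : (0 < c)%N) (hcp : (c <= p)%N)
  (hb2 : (c <= b2 + 1)%N) (hb2p : (b2 + 1 - c < p)%N)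
  (hb12 : (b1 + b2 + 1 - c < p)%N)
  (hlo : (p.-1 <= a + b1 + b2 + 1 - c)%N)
  (hhi : (a + b1 + b2 + 1 - c < (2 * p).-1)%N) :
  (((-1) ^+ (p.-1 - (p - c)) *+ 'C(b2, p.-1 - (p - c))) *
   ((-1) ^+ (p.-1 - a) *+ 'C(b1 + b2 + 1 - c, p.-1 - a)) : 'F_p)
  = (a`!%:R * (b1 + b2 + 1 - c)`!%:R / (a + b1 + b2 + 2 - c - p)`!%:R)
    * ((p - c)`!%:R * b2`!%:R / (b2 + 1 - c)`!%:R).
Proof.
have p1 := prime_gt1 hp.
have e1 : (p.-1 - (p - c) = c.-1)%N by move: p1 hc0 hcp; clear; lia.
rewrite e1 -[X in X * _]mulr_natr -[X in _ * X]mulr_natr.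
rewrite [in X in X * _]binF //; last (by move: hb2p hc0 hb2; clear; lia);
   last (by move: hcp hc0; clear; lia); last by move: hb2 hc0; clear; lia.
rewrite [in X in _ * X]binF //; last (by move: hhi ha hb12 hlo p1; clear; lia);
   last (by move: p1; clear; lia); last by move: hlo ha p1; clear; lia.
have e2 : (b2 - c.-1 = b2 + 1 - c)%N by move: hb2 hc0; clear; lia.
have e3 : (b1 + b2 + 1 - c - (p.-1 - a) = a + b1 + b2 + 2 - c - p)%N.
  by move: hlo ha hb2 hc0 p1; clear; lia.
rewrite e2 e3.
have e4 : (p.-1 - c.-1 = p - c)%N by move: hcp hc0; clear; lia.
have e5 : c.-1.+1 = c by move: hc0; clear; lia.
have hc1 : (c.-1 < p)%N by move: hcp hc0; clear; lia.
have W1 := @wilsonF p c.-1 hp hc1.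
rewrite e4 e5 in W1.
have W2 := @wilsonF p a hp ha.
have nz1 : ((p - c)`!%:R : 'F_p) != 0 by apply: fact_nz => //; move: hc0 p1; clear; lia.
have nza : (a`!%:R : 'F_p) != 0 by apply: fact_nz.
have -> : ((c.-1)`!%:R : 'F_p) = (-1) ^+ c / (p - c)`!%:R.
  by rewrite -W1 (mulfK nz1).
have -> : ((p.-1 - a)`!%:R : 'F_p) = (-1) ^+ a.+1 / a`!%:R.
  by rewrite -W2 [a`!%:R * _]mulrC (mulfK nza).
have -> : ((-1) ^+ c : 'F_p) = - (-1) ^+ c.-1 by rewrite -{1}e5 exprS mulN1r.
have -> : ((-1) ^+ (p.-1 - a) : 'F_p) = (-1) ^+ a.
  have ev : (p.-1 - a + a = (p./2).*2)%N.
    rewrite subnK; last by move: ha; clear; lia.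
    by rewrite -{1}(odd_double_half p) hodd.
  apply: (mulIf (_ : (-1) ^+ a != 0)); first by rewrite signr_eq0.
  by rewrite -!exprD ev addnn -signr_odd odd_double -[in RHS]signr_odd odd_double.
rewrite exprS mulN1r.
have nzs1 : ((-1) ^+ c.-1 : 'F_p) != 0 by rewrite signr_eq0.
have nzs2 : ((-1) ^+ a : 'F_p) != 0 by rewrite signr_eq0.
have nzD : ((a + b1 + b2 + 2 - c - p)`!%:R : 'F_p) != 0.
  by apply: fact_nz => //; move: hhi p1 hc0; clear; lia.
have nzE : ((b2 + 1 - c)`!%:R : 'F_p) != 0 by apply: fact_nz.
by apply: alg_id.
Qed.

Lemma regroup (R : comNzRingType) (X1 U S : R) a b1 m C :
  (X1 ^+ a * U ^+ b1) * ((S * U ^+ m) *+ C) = (S *+ C) * (X1 ^+ a * U ^+ (b1 + m)).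
Proof. rewrite exprD; ring. Qed.

Theorem theorem3p7 (p a b1 b2 c : nat)
  (hp : prime p) (hodd : odd p)
  (ha : (a < p)%N) (hc0 : (0 < c)%N) (hcp : (c <= p)%N)
  (hb2 : (c <= b2 + 1)%N) (hb2p : (b2 + 1 - c < p)%N)
  (hb12 : (b1 + b2 + 1 - c < p)%N)
  (hlo : (p.-1 <= a + b1 + b2 + 1 - c)%N)
  (hhi : (a + b1 + b2 + 1 - c < (2 * p).-1)%N) :
  Fp_integral2 p 1 1
    ((var_t : {poly {poly 'F_p}}) ^+ a * (1 - var_t) ^+ b1
       * (var_s - var_t) ^+ (p - c) * (1 - var_s) ^+ b2)
  = (a`!%:R * (b1 + b2 + 1 - c)`!%:R / (a + b1 + b2 + 2 - c - p)`!%:R)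
    * ((p - c)`!%:R * b2`!%:R / (b2 + 1 - c)`!%:R).
Proof.
have p1 := prime_gt1 hp.
pose u : {poly 'F_p} := 1 - 'X.
pose f : {poly {poly 'F_p}} := 'X^(p - c) * (u%:P - 'X) ^+ b2.
pose Q : {poly 'F_p} := 'X^a * (1 - 'X) ^+ b1.
have E : ((var_t : {poly {poly 'F_p}}) ^+ a * (1 - var_t) ^+ b1
       * (var_s - var_t) ^+ (p - c) * (1 - var_s) ^+ b2)
       = Q%:P * (f \Po ('X + (- 'X : {poly 'F_p})%:P)).
  rewrite /f /Q /u /var_t /var_s comp_polyM !rmorphXn /= comp_polyX comp_polyB comp_polyC comp_polyX.
  rewrite rmorphM /= !rmorphXn /= !rmorphB /= !rmorph1 polyCN.
  by rewrite opprB addrA subrK !mulrA.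
rewrite /Fp_integral2 !mul1n E coefCM trans_coef; last first.
- have hg : (size ((u%:P - 'X) ^+ b2) <= b2.+1)%N.
    apply: leq_trans (size_poly_exp_leq _ _) _.
    by rewrite -opprB size_polyN size_XsubC mul1n.
  apply: leq_trans (size_polyMleq _ _) _; rewrite size_polyXn.
  rewrite -addnn; move: hg hb2p hc0 hcp p1; clear; move: (size ((u%:P - 'X) ^+ b2)) => z; lia.
- by rewrite pchar_poly; apply: pchar_Fp.
rewrite /f coefXnM.
have hk1 : (p.-1 < p - c)%N = false by move: hc0 p1; clear; lia.
rewrite hk1 coef_CsubX.
have eB : (b1 + (b2 - (p.-1 - (p - c))) = b1 + b2 + 1 - c)%N.
  by move: hc0 hcp hb2 p1; clear; lia.
rewrite /Q /u regroup eB.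
have -> : ((-1) ^+ (p.-1 - (p - c)) *+ 'C(b2, p.-1 - (p - c)) : {poly 'F_p})
   = ((-1) ^+ (p.-1 - (p - c)) *+ 'C(b2, p.-1 - (p - c)))%:P.
  by rewrite rmorphMn /= rmorphXn /= rmorphN1.
rewrite coefCM coefXnM.
have hk2 : (p.-1 < a)%N = false by move: ha p1; clear; lia.
rewrite hk2 -polyC1 coef_CsubX expr1n mulr1.
exact: final_arith.
Qed.
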